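(* Let $M$ be a metric structure. If for $1\leq j\leq n$ the definable predicates $\phi_j(x)=\phi_j(x_1,\dots,x_m)$ have the strong Erdős–Hajnal property, and $u:[0,1]^n\to[0,1]$ is continuous, then $u(\phi_1(x),\dots,\phi_n(x))$ also has the strong Erdős–Hajnal property.
   Context: A $[0,1]$-valued definable predicate $\phi(x_1,\dots,x_m)$ on $M$ has the strong Erdős–Hajnal property if for every $\varepsilon>0$ there is $\delta>0$ such that for all finite $A_i\subseteq M^{x_i}$ ($1\le i\le m$) there are $B_i\subseteq A_i$ with $|B_i|\geq\delta|A_i|$ such that $(B_1,\dots,B_m)$ is $(\phi,\varepsilon)$-homogeneous, i.e. $|\phi(a)-\phi(a')|\leq\varepsilon$ for all $a,a'\in B_1\times\dots\times B_m$. *)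

(* Defs.v *)
From HB Require Import structures.
From mathcomp Require Import all_boot all_order all_algebra.
From mathcomp Require Import all_classical all_reals topology normedtype.
Set Implicit Arguments. Unset Strict Implicit. Unset Printing Implicit Defensive.
Import Order.TTheory GRing.Theory Num.Theory.
Import numFieldNormedType.Exports.
Local Open Scope ring_scope.

(* X i plays the role of M^{x_i}; a predicate phi(x_1,...,x_m) is a
   function on the dependent product of the X i. Finite subsets are
   duplicate-free sequences. *)

Definition homogeneous (R : realType) (m : nat) (X : 'I_m -> eqType)
  (phi : (forall i : 'I_m, X i) -> R) (eps : R)
  (B : forall i : 'I_m, seq (X i)) : Prop :=
  forall a a' : forall i : 'I_m, X i,
    (forall i, a i \in B i) -> (forall i, a' i \in B i) ->
    `|phi a - phi a'| <= eps.

Definition strong_EH (R : realType) (m : nat) (X : 'I_m -> eqType)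
  (phi : (forall i : 'I_m, X i) -> R) : Prop :=
  forall eps : R, 0 < eps ->
  exists2 delta : R, 0 < delta &
    forall A : forall i : 'I_m, seq (X i), (forall i, uniq (A i)) ->
    exists B : forall i : 'I_m, seq (X i),
      (forall i, [/\ uniq (B i), {subset B i <= A i} &
                     delta * (size (A i))%:R <= (size (B i))%:R])
      /\ homogeneous phi eps B.

Definition unit_cube (R : realType) (n : nat) : set 'rV[R]_n :=
  [set v | forall j : 'I_n, 0 <= v ord0 j <= 1].

(* Main.v *)
Require Import Defs.
From HB Require Import structures.
From mathcomp Require Import all_boot all_order all_algebra.
From mathcomp Require Import all_classical all_reals topology normedtype.
Import Order.TTheory GRing.Theory Num.Theory.
Import numFieldNormedType.Exports.
Local Open Scope ring_scope.
Local Open Scope classical_set_scope.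

Lemma unifc (R : realType) n (K : set 'rV[R]_n) (f : 'rV[R]_n -> R) :
  compact K -> {within K, continuous f} ->
  forall e : R, 0 < e -> exists2 d : R, 0 < d &
   forall v w, K v -> K w -> `|v - w| < d -> `|f v - f w| < e.
Proof.
move=> cK cf e e0.
have := (proj1 (compact_near_coveringP K) cK R (nbhs (0:R))
  (fun d x => K x -> forall w, K w -> `|x - w| < `|d| -> `|f x - f w| < e) _).
move=> H.
have {H} : \forall d \near (0:R), K `<=` (fun x => K x -> forall w, K w -> `|x - w| < `|d| -> `|f x - f w| < e).
  apply: H => x Kx.
  have := (proj1 (subspace_continuousP K f) cf x Kx).
  move=> /cvgrPdist_lt /(_ (e/2)) /=.
  rewrite divr_gt0 // => /(_ isT).
  rewrite /within /= => /nbhs_ballP [r r0 Hr].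
  exists (ball x (r/2), ball (0:R) (r/2)).
    by split; apply: nbhsx_ballx; rewrite divr_gt0.
  move=> [x1 d] [/= bx bd] Kx1 w Kw hw.
  have bx' : `|x - x1| < r/2 by move: bx; rewrite -ball_normE.
  have bd' : `|d| < r/2 by move: bd; rewrite -ball_normE /= sub0r normrN.
  have Hr' : forall t, `|x - t| < r -> K t -> `|f x - f t| < e/2.
    by move=> t ht; apply: Hr; rewrite -ball_normE.
  have h1 : `|f x - f x1| < e/2.
    by apply: (Hr') => //; apply: (lt_le_trans (bx')) ; rewrite ler_pdivrMr // ler_pMr // ler1n.
  have h2 : `|f x - f w| < e/2.
    apply: (Hr') => //.
    apply: le_lt_trans (ler_distD x1 x w) _.
    rewrite [r]splitr; apply: ltrD; [exact: bx' | exact: (lt_trans hw bd')].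
  apply: le_lt_trans (ler_distD (f x) _ _) _.
  by rewrite distrC; apply: lt_le_trans (ltrD h1 h2) _; rewrite -splitr.
move=> /nbhs_ballP [r r0 Hr].
exists (r/2); first by rewrite divr_gt0.
move=> v w Kv Kw hvw.
have : ball (0:R) r (r/2).
  rewrite -ball_normE /= sub0r normrN gtr0_norm ?divr_gt0 //.
  by rewrite ltr_pdivrMr // ltr_pMr // ltr1n.
move=> /Hr /(_ v Kv Kv w Kw); apply.
by rewrite gtr0_norm // divr_gt0.
Unshelve. all: by end_near.
Qed.

Lemma hom_sub (R : realType) (m : nat) (X : 'I_m -> eqType)
  (phi : (forall i : 'I_m, X i) -> R) (eps : R) B B' :
  homogeneous phi eps B -> (forall i, {subset B' i <= B i}) -> homogeneous phi eps B'.
Proof. by move=> hB sB a a' ha ha'; apply: hB => i; apply: sB. Qed.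

Lemma refine (R : realType) (m n : nat) (X : 'I_m -> eqType)
  (phi : 'I_n -> (forall i : 'I_m, X i) -> R) (eta : R) (deltas : 'I_n -> R) :
  (forall j, 0 < deltas j) ->
  (forall j, forall A : forall i : 'I_m, seq (X i), (forall i, uniq (A i)) ->
    exists B : forall i : 'I_m, seq (X i),
      (forall i, [/\ uniq (B i), {subset B i <= A i} &
                     deltas j * (size (A i))%:R <= (size (B i))%:R])
      /\ homogeneous (phi j) eta B) ->
  forall s : seq 'I_n,
  forall A : forall i : 'I_m, seq (X i), (forall i, uniq (A i)) ->
    exists B : forall i : 'I_m, seq (X i),
      (forall i, [/\ uniq (B i), {subset B i <= A i} &
                     (\prod_(j <- s) deltas j) * (size (A i))%:R <= (size (B i))%:R])
      /\ (forall j, j \in s -> homogeneous (phi j) eta B).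
Proof.
move=> d0 hEH; elim=> [|j s IH] A uA.
  exists A; split => // i; split => //; by rewrite big_nil mul1r.
have [B' [hB' homB']] := IH A uA.
have [B'' [hB'' homB'']] := hEH j B' (fun i => let: And3 u _ _ := hB' i in u).
exists B''; split.
  move=> i; have [u1 s1 z1] := hB' i; have [u2 s2 z2] := hB'' i.
  split => //; first by move=> x /s2 /s1.
  rewrite big_cons -mulrA; apply: le_trans z2.
  by rewrite ler_pM2l.
move=> k; rewrite in_cons => /orP [/eqP -> //|ks].
apply: hom_sub (homB' k ks) _ => i; by have [_ s2 _] := hB'' i.
Qed.

Lemma cube_compact (R : realType) n : compact (@unit_cube R n).
Proof.
have -> : @unit_cube R n = [set v : 'rV[R]_n | forall i, (fun=> `[(0:R), 1]%classic) i (v ord0 i)].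
  by rewrite /unit_cube; apply/seteqP; split => v /= H i; have := H i; rewrite /= in_itv.
exact: (@rV_compact R n (fun=> `[(0:R), 1]%classic) (fun=> @segment_compact R 0 1)).
Qed.

Theorem mainTheorem10 (R : realType) (m n : nat) (X : 'I_m -> eqType)
  (phi : 'I_n -> (forall i : 'I_m, X i) -> R)
  (u : 'rV[R]_n -> R) :
  (forall j x, (0 <= phi j x <= 1)%R) ->
  (forall j, strong_EH (phi j)) ->
  {within @unit_cube R n, continuous u} ->
  (forall v, @unit_cube R n v -> (0 <= u v <= 1)%R) ->
  strong_EH (fun x => u (\row_(j < n) phi j x)).
Proof.
move=> phi01 EH cu _ eps eps0.
have [d d0 hd] := @unifc R n _ u (cube_compact R n) cu eps eps0.
have eta0 : 0 < d / 2 by rewrite divr_gt0.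
have : forall j, exists delta : R, 0 < delta /\
    forall A : forall i : 'I_m, seq (X i), (forall i, uniq (A i)) ->
    exists B : forall i : 'I_m, seq (X i),
      (forall i, [/\ uniq (B i), {subset B i <= A i} &
                     delta * (size (A i))%:R <= (size (B i))%:R])
      /\ homogeneous (phi j) (d/2) B.
  by move=> j; have [delta ? ?] := EH j _ eta0; exists delta.
move=> /choice [deltas hdeltas].
exists (\prod_(j <- enum 'I_n) deltas j).
  by apply: prodr_gt0 => j _; case: (hdeltas j).
move=> A uA.
have [B [hB homB]] := @refine R m n X phi (d/2) deltas (fun j => proj1 (hdeltas j)) (fun j => proj2 (hdeltas j)) (enum 'I_n) A uA.
exists B; split => // a a' ha ha'.
have cube : forall x, @unit_cube R n (\row_(j < n) phi j x).
  by move=> x j; rewrite mxE.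
apply/ltW/hd => //.
apply: le_lt_trans (_ : d / 2 < d); last by rewrite ltr_pdivrMr // ltr_pMr // ltr1n.
rewrite -[X in X <= _]/(mx_norm _) mx_normrE.
apply: bigmax_le; first exact: ltW.
move=> [i j] _ /=; rewrite !mxE.
by apply: (homB j (mem_enum _ j)).
Qed.
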